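(* Let $A$ be a finite alphabet and let $H\in I(A^* )$ be defined by $H(u,v)=\binom{v}{u}\eta(u,v)$. Then for all $u,v\in A^*$ and every integer $\ell\ge 0$, $$H^\ell(u,v)=\ell!\,\binom{v}{u}\,[\,|v|=|u|+\ell\,],$$ where $H^\ell$ is the $\ell$-th power of $H$ under convolution (with $H^0=\delta$).
   Context: $A^*$ is the set of finite words over the finite alphabet $A$; $|w|$ is the length of $w$. For words $u=a_1\cdots a_k$ and $v=b_1\cdots b_n$, $\binom{v}{u}$ denotes the number of order-preserving injections $\varphi:[k]\to[n]$ with $a_i=b_{\varphi(i)}$ for all $i$ (the number of occurrences of $u$ as a scattered subword/subsequence of $v$). $A^*$ is partially ordered by $u\le v$ iff $\binom{v}{u}>0$. For a locally finite poset $Q$, the incidence algebra $I(Q)$ over $\mathbb{Q}$ consists of all functions $F$ on pairs $(x,y)$ with $x\le y$, with convolution $(FG)(x,y)=\sum_{x\le z\le y}F(x,z)G(z,y)$ and identity $\delta(x,y)=[x=y]$. Here $[\psi]$ is the Iverson bracket ($1$ if $\psi$ holds, $0$ otherwise), and $\eta(x,y)=[y\text{ covers }x]$; in $A^*$, $v$ covers $u$ iff $u\le v$ and $|v|=|u|+1$. *)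

(* Defs.v *)
From HB Require Import structures.
From mathcomp Require Import all_boot all_order all_algebra.
Set Implicit Arguments. Unset Strict Implicit. Unset Printing Implicit Defensive.
Import GRing.Theory.
Local Open Scope ring_scope.

Section Words.
Variable A : finType.

(* binom v u : number of order-preserving injections phi : [|u|] -> [|v|]
   with u_i = v_(phi i), i.e. occurrences of u as a scattered subword of v. *)
Definition binom (v u : seq A) : nat :=
  #|[set f : {ffun 'I_(size u) -> 'I_(size v)} |
      [forall i : 'I_(size u), forall j : 'I_(size u), (i < j)%N ==> (f i < f j)%N]
      && [forall i : 'I_(size u), tnth (in_tuple u) i == tnth (in_tuple v) (f i)]]|.

Definition subw (u v : seq A) : bool := (0 < binom v u)%N.

(* incidence functions (values on non-comparable pairs are irrelevant) *)
Definition incfun := seq A -> seq A -> rat.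

(* convolution: sum over the interval [u, v] = {z | u <= z <= v};
   every such z has length <= |v|, so we enumerate words by length. *)
Definition conv (F G : incfun) : incfun := fun u v =>
  \sum_(k < (size v).+1) \sum_(t : k.-tuple A | subw u t && subw t v)
     F u (tval t) * G (tval t) v.

Definition delta : incfun := fun u v => (u == v)%:R.

Definition eta : incfun := fun u v => (subw u v && (size v == (size u).+1))%:R.

Definition incpow (F : incfun) (l : nat) : incfun := iter l (conv F) delta.

Definition Hfun : incfun := fun u v => (binom v u)%:R * eta u v.

End Words.

(* Main.v *)
Require Import Defs.
From HB Require Import structures.
From mathcomp Require Import all_boot all_order all_algebra.
From mathcomp Require Import ring.
Set Implicit Arguments. Unset Strict Implicit. Unset Printing Implicit Defensive.

Section S.
Variable A : finType.

Fixpoint sc (v u : seq A) : nat :=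
  match v with
  | [::] => (u == [::])
  | b :: v' => sc v' u + (if u is a :: u' then (a == b) * sc v' u' else 0)
  end.

Definition P (v u : seq A) (f : {ffun 'I_(size u) -> 'I_(size v)}) : bool :=
  [forall i : 'I_(size u), forall j : 'I_(size u), (i < j)%N ==> (f i < f j)%N]
      && [forall i : 'I_(size u), tnth (in_tuple u) i == tnth (in_tuple v) (f i)].

Lemma binomE (v u : seq A) : binom v u = #|[set f | @P v u f]|.
Proof. by []. Qed.

Lemma binom_nil_r (v : seq A) : binom v [::] = 1%N.
Proof.
rewrite binomE.
have -> : [set f | @P v [::] f] = setT.
  by apply/setP => f; rewrite !inE; apply/andP; split; apply/forallP => -[].
rewrite cardsT card_ffun !card_ord; done.
Qed.

Lemma binom_nil_l (a : A) u : binom [::] (a :: u) = 0%N.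
Proof.
rewrite binomE; apply/eqP; rewrite -leqn0.
by apply: leq_trans (max_card _) _; rewrite card_ffun !card_ord /= exp0n.
Qed.

Definition pred_ord n (x : 'I_n.+1) (hx : x != ord0) : 'I_n.
Proof.
refine (@Ordinal n x.-1 _).
case: x hx => [[|m] hm] //= _.
Defined.

Lemma lift_pred_ord n (x : 'I_n.+1) (hx : x != ord0) : lift ord0 (pred_ord hx) = x.
Proof.
apply: val_inj => /=.
by case: x hx => [[|m] hm].
Qed.


Lemma forall_split n (p : pred 'I_n.+1) :
  [forall i, p i] = p ord0 && [forall j : 'I_n, p (lift ord0 j)].
Proof.
apply/forallP/andP => [H|[H0 /forallP H1] i]; first by split => //; apply/forallP.
by case: (unliftP ord0 i) => [j ->|->].
Qed.

Definition Fl (v u : seq A) (b : A) (g : {ffun 'I_(size u) -> 'I_(size v)}) :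
   {ffun 'I_(size u) -> 'I_(size (b :: v))} := [ffun i => lift ord0 (g i)].

Lemma PF (b : A) v u g : @P (b :: v) u (Fl b g) = @P v u g.
Proof.
rewrite /P; congr andb.
  apply: eq_forallb => i; apply: eq_forallb => j.
  by rewrite !ffunE !lift0 ltnS.
apply: eq_forallb => i; rewrite ffunE !(tnth_nth b) lift0 /=.
done.
Qed.

Lemma Fl_inj (b : A) v u : injective (@Fl v u b).
Proof.
move=> g1 g2 E; apply/ffunP => i.
by move/ffunP: E => /(_ i); rewrite !ffunE => /lift_inj.
Qed.

Lemma part1 (b : A) v u :
  #|[set f | @P (b :: v) u f] :&: [set f : {ffun 'I_(size u) -> 'I_(size (b :: v))} | [forall i, f i != ord0]]| = binom v u.
Proof.
rewrite binomE -(card_imset _ (@Fl_inj b v u)).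
apply: eq_card => f; rewrite !inE; apply/andP/imsetP.
  move=> [Pf /forallP H].
  have E : Fl b [ffun i => pred_ord (H i)] = f.
    by apply/ffunP => i; rewrite !ffunE lift_pred_ord.
  by exists [ffun i => pred_ord (H i)] => //; rewrite inE -(PF b) E.
move=> [g]; rewrite inE => Pg ->; split; first by rewrite PF.
by apply/forallP => i; rewrite ffunE eq_sym neq_lift.
Qed.


Lemma part2_nil (b : A) v :
  #|[set f | @P (b :: v) [::] f] :\: [set f : {ffun 'I_(size [::]) -> 'I_(size (b :: v))} | [forall i, f i != ord0]]| = 0%N.
Proof.
apply/eqP; rewrite cards_eq0; apply/eqP/setP => f; rewrite !inE.
by have -> : [forall i : 'I_0, f i != ord0] by apply/forallP => -[].
Qed.

Definition Gl (v u : seq A) (a b : A) (g : {ffun 'I_(size u) -> 'I_(size v)}) :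
   {ffun 'I_(size (a :: u)) -> 'I_(size (b :: v))} :=
  [ffun i => oapp (fun j => lift ord0 (g j)) ord0 (unlift ord0 i)].

Lemma Gl_lift v u a b g j : @Gl v u a b g (lift ord0 j) = lift ord0 (g j).
Proof. by rewrite ffunE liftK. Qed.

Lemma Gl_0 v u a b g : @Gl v u a b g ord0 = ord0.
Proof. by rewrite ffunE unlift_none. Qed.

Lemma Gl_inj v u a b : injective (@Gl v u a b).
Proof.
move=> g1 g2 E; apply/ffunP => i.
by move/ffunP: E => /(_ (lift ord0 i)); rewrite !Gl_lift => /lift_inj.
Qed.

Lemma PG (a : A) v u g : @P (a :: v) (a :: u) (Gl a a g) = @P v u g.
Proof.
rewrite /P; congr andb.
  rewrite forall_split andbC; apply/andP/idP.
    move=> [/forallP H _]; apply/forallP => i; apply/forallP => j.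
    move: (H i) => /forallP /(_ (lift ord0 j)).
    by rewrite !Gl_lift !lift0 !ltnS.
  move=> /forallP H; split.
    apply/forallP => i; rewrite forall_split; apply/andP; split.
      by rewrite ltn0.
    apply/forallP => j; rewrite !Gl_lift !lift0 !ltnS.
    by move: (H i) => /forallP /(_ j).
  by rewrite forall_split; apply/andP; split => //; apply/forallP => j; rewrite Gl_0 Gl_lift lift0.
rewrite forall_split; apply/andP/idP.
  move=> [_ /forallP H]; apply/forallP => i; move: (H i).
  by rewrite Gl_lift !(tnth_nth a) lift0 /=.
move=> /forallP H; split; first by rewrite Gl_0 !(tnth_nth a).
apply/forallP => i; rewrite Gl_lift !(tnth_nth a) lift0 /=.
by move: (H i); rewrite !(tnth_nth a).
Qed.


Lemma P_incr v u f (i j : 'I_(size u)) : @P v u f -> (i < j)%N -> (f i < f j)%N.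
Proof. by case/andP => /forallP /(_ i) /forallP /(_ j) /implyP H _ /H. Qed.

Lemma P_match (x0 : A) v u f (i : 'I_(size u)) : @P v u f -> nth x0 u i = nth x0 v (f i).
Proof. by case/andP => _ /forallP /(_ i) /eqP; rewrite !(tnth_nth x0). Qed.

Lemma part2_cons (a b : A) v u :
  #|[set f | @P (b :: v) (a :: u) f] :\: [set f : {ffun 'I_(size (a :: u)) -> 'I_(size (b :: v))} | [forall i, f i != ord0]]|
  = ((a == b) * binom v u)%N.
Proof.
have key : forall f, @P (b :: v) (a :: u) f -> ~~ [forall i, f i != ord0] -> f ord0 = ord0.
  move=> f Pf /forallPn [i]; rewrite negbK => /eqP fi0.
  case: (unliftP ord0 i) fi0 => [j ->|->] // fj0.
  have := @P_incr (b :: v) (a :: u) f ord0 (lift ord0 j) Pf.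
  by rewrite lift0 fj0 => /(_ isT).
have key2 : forall f, @P (b :: v) (a :: u) f -> forall j, f (lift ord0 j) != ord0.
  move=> f Pf j; have := @P_incr (b :: v) (a :: u) f ord0 (lift ord0 j) Pf.
  rewrite lift0 => /(_ isT); apply: contraTneq => ->; by [].
case ab: (a == b); last first.
  rewrite mul0n; apply/eqP; rewrite cards_eq0; apply/eqP/setP => f; rewrite !inE.
  apply/negP => /andP [nA Pf].
  have f0 := key f Pf nA.
  have := @P_match a (b :: v) (a :: u) f ord0 Pf; rewrite f0 /= => E.
  by move: ab; rewrite E eqxx.
move/eqP: ab => ab; subst b; rewrite mul1n.
rewrite binomE -(card_imset _ (@Gl_inj v u a a)).
apply: eq_card => f; rewrite !inE; apply/andP/imsetP.
  move=> [nA Pf].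
  have f0 := key f Pf nA.
  have H := key2 f Pf.
  have E : Gl a a [ffun i => pred_ord (H i)] = f.
    apply/ffunP => i; case: (unliftP ord0 i) => [j ->|->].
      by rewrite Gl_lift ffunE lift_pred_ord.
    by rewrite Gl_0 f0.
  by exists [ffun i => pred_ord (H i)] => //; rewrite inE -(PG a) E.
move=> [g]; rewrite inE => Pg ->; split; last by rewrite PG.
by apply/forallPn; exists ord0; rewrite Gl_0 eqxx.
Qed.

Lemma binom_cons (b : A) v u :
  binom (b :: v) u = (binom v u + (if u is a :: u' then (a == b) * binom v u' else 0))%N.
Proof.
rewrite [binom (b :: v) u]binomE -(cardsID [set f : {ffun 'I_(size u) -> 'I_(size (b :: v))} | [forall i, f i != ord0]]).
rewrite part1; congr addn.
case: u => [|a u]; first exact: part2_nil.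
exact: part2_cons.
Qed.

Lemma binom_sc v u : binom v u = sc v u.
Proof.
elim: v u => [|b v IH] [|a u] /=.
- by rewrite binom_nil_r.
- by rewrite binom_nil_l.
- by rewrite binom_cons !IH.
- by rewrite binom_cons !IH.
Qed.


Lemma sc_gt v u : (size v < size u)%N -> sc v u = 0%N.
Proof.
elim: v u => [|b v IH] [|a u] //= H.
rewrite ltnS in H; rewrite IH; last by rewrite /= ltnS ltnW.
by rewrite IH ?muln0.
Qed.

Lemma sc_eq t u : size t = size u -> sc t u = (t == u).
Proof.
elim: t u => [|b t IH] [|a u] //= [H].
rewrite sc_gt ?H // IH // add0n eqseq_cons eq_sym.
by case: eqP; rewrite ?mul1n ?mul0n.
Qed.

Lemma sum_tuple_split k (F : seq A -> nat) :
  (\sum_(t : k.+1.-tuple A) F t = \sum_(a : A) \sum_(t : k.-tuple A) F (a :: t))%N.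
Proof.
rewrite pair_big /=.
rewrite (reindex (fun p : A * k.-tuple A => cons_tuple p.1 p.2)) //=.
exists (fun t : k.+1.-tuple A => (thead t, behead_tuple t)).
  by move=> [a t] _ /=; congr pair; apply: val_inj.
move=> t _; apply: val_inj => /=.
by case: t => [[|x s]].
Qed.

Lemma sum_eq_tuple k (u : seq A) (G : seq A -> nat) : size u = k ->
  (\sum_(t : k.-tuple A) (tval t == u) * G t = G u)%N.
Proof.
move=> Hk.
pose t0 : k.-tuple A := @Tuple k A u (introT eqP Hk).
rewrite (bigD1 t0) //= eqxx mul1n big1 ?addn0 // => t tt0.
rewrite (_ : (tval t == u) = false) ?mul0n //; apply/negbTE.
by apply: contra tt0 => /eqP E; apply/eqP/val_inj.
Qed.

Lemma key v : forall u k, size u = k ->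
  (\sum_(t : k.+1.-tuple A) sc t u * sc v t = (size v - k) * sc v u)%N.
Proof.
elim: v => [|b v IH] u k Hk.
  rewrite big1 ?sub0n ?mul0n // => t _.
  by case: t => [[|x s]] //= _; rewrite muln0.
rewrite [size _]/= [sc (b :: v) u]/=.
under eq_bigr => t _ do rewrite [sc (b :: v) t]/= mulnDr.
rewrite big_split /= IH //. rewrite (sum_tuple_split k (fun s => sc s u * (if s is c :: s' then (c == b) * sc v s' else 0))) /=.
rewrite (bigD1 b) //= [X in _ + (_ + X)]big1 ?addn0; last first.
  move=> c cb; apply: big1 => t _; rewrite (negbTE cb) mul0n muln0; done.
rewrite eqxx.
under eq_bigr => t _ do rewrite mul1n mulnDl.
rewrite big_split /=.
rewrite (eq_bigr (fun t : k.-tuple A => (tval t == u) * sc v t)); last first.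
  by move=> t _; rewrite sc_eq // size_tuple.
rewrite sum_eq_tuple //.
case: u Hk => [|a u] Hk.
  rewrite big1 ?addn0 /=; last by move=> t _; rewrite mul0n.
  by subst k; rewrite !subn0 mulSn addnC.
subst k.
under eq_bigr => t _ do rewrite -mulnA.
rewrite -big_distrr /= IH //.
have [le|lt] := leqP (size u).+1 (size v).
  rewrite subSS; have -> : (size v - size u = (size v - (size u).+1).+1)%N by rewrite subnS prednK // subn_gt0.
  rewrite mulSn; ring.
rewrite sc_gt //.
rewrite subSS; ring.
Qed.

End S.

Import GRing.Theory.
Local Open Scope ring_scope.

Lemma subw_sc (A : finType) (u v : seq A) : subw u v = (0 < sc v u)%N.
Proof. by rewrite /subw binom_sc. Qed.

Theorem mainTheorem1 (A : finType) (u v : seq A) (l : nat) :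
  incpow (@Hfun A) l u v
  = (l`!)%:R * (binom v u)%:R * (size v == (size u + l)%N)%:R.
Proof.
elim: l u v => [|l IH] u v.
  rewrite /incpow /= /delta binom_sc addn0 mul1r.
  have [E|NE] := eqVneq (size v) (size u).
    by rewrite sc_eq // mulr1 eq_sym.
  rewrite mulr0; case: eqP => // Euv; by move: NE; rewrite Euv eqxx.
rewrite /incpow iterS -/(incpow (@Hfun A) l) /conv.
pose Y (t : seq A) := (sc t u * (size t == (size u).+1) * (l`! * sc v t * (size v == size t + l)))%N.
have HY : forall k (t : k.-tuple A),
   (if subw u t && subw t v then Hfun u t * incpow (@Hfun A) l t v else 0) = (Y t)%:R.
  move=> k t; rewrite IH /Hfun /Defs.eta /Y !binom_sc !subw_sc.
  case: (posnP (sc t u)) => [->|pu]; first by rewrite /= !mul0n.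
  case: (posnP (sc v t)) => [->|pv]; first by rewrite andbF /= !muln0.
  by rewrite /= !natrM; ring.
under eq_bigr => k _ do rewrite big_mkcond /= (eq_bigr _ (fun t _ => HY k t)) -natr_sum.
rewrite -natr_sum -!natrM; congr (_%:R).
have [le|lt] := leqP (size u).+2 (size v).+1.
  rewrite (bigD1 (Ordinal le)) //= [X in (_ + X)%N]big1 ?addn0; last first.
    move=> k kne; apply: big1 => t _; rewrite /Y size_tuple.
    case: eqP => [Ek|]; last by rewrite muln0 mul0n.
    by case/negP: kne; rewrite -val_eqE /= Ek.
  rewrite /Y.
  under eq_bigr => t _ do rewrite size_tuple eqxx muln1 (mulnC l`!) -!mulnA.
  under eq_bigr => t _ do rewrite mulnA.
  rewrite -big_distrl /= key // binom_sc addnS -addSn.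
  case: eqP => [->|_]; last by rewrite !muln0.
  by rewrite addSn subSn ?leq_addr // addKn factS; ring.
rewrite big1 //=; last first.
  move=> k _; apply: big1 => t _; rewrite /Y size_tuple.
  case: eqP => [Ek|]; last by rewrite muln0 mul0n.
  have H := ltn_ord k; rewrite Ek in H; rewrite !ltnS in H lt.
  by move: (leq_trans H lt); rewrite ltnn.
case: eqP => [E|]; last by rewrite muln0.
by move: lt; rewrite E addnS ltnS ltnNge leq_addr.
Qed.
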